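(* Let $\boldsymbol{\beta}\in\mathbb{R}^q$ be fixed, let $\boldsymbol{x}_1,\dots,\boldsymbol{x}_r$ be fixed covariate vectors, and let $h(\boldsymbol{x},\boldsymbol{\beta})\in(0,1)$ be a known function differentiable in $\boldsymbol{\beta}$, with gradient $\nabla_{\boldsymbol{\beta}}h(\boldsymbol{x},\boldsymbol{\beta})$ (a column vector). For $\mu>0$ define the $(q+1)\times(q+1)$ Fisher information matrix $$I_r(\boldsymbol{\beta},\mu)=\begin{bmatrix}\sum_{i=1}^r\frac{\mu\,\nabla_{\boldsymbol{\beta}}h(\boldsymbol{x}_i,\boldsymbol{\beta})\nabla_{\boldsymbol{\beta}}'h(\boldsymbol{x}_i,\boldsymbol{\beta})}{h(\boldsymbol{x}_i,\boldsymbol{\beta})} & \sum_{i=1}^r\nabla_{\boldsymbol{\beta}}h(\boldsymbol{x}_i,\boldsymbol{\beta})\\ \sum_{i=1}^r\nabla_{\boldsymbol{\beta}}'h(\boldsymbol{x}_i,\boldsymbol{\beta}) & \sum_{i=1}^r\frac{h(\boldsymbol{x}_i,\boldsymbol{\beta})}{\mu}\end{bmatrix},$$ and suppose it is nonsingular, with inverse $V=V(\mu)$ (the asymptotic variance-covariance matrix of the MLE of $(\boldsymbol{\beta},\mu)$). Then, with $\boldsymbol{\beta}$ and the $\boldsymbol{x}_i$ held fixed, each of the first $q$ diagonal entries of $V(\mu)$ (the asymptotic variances of the components of $\hat{\boldsymbol{\beta}}$) is a nonincreasing function of $\mu\in(0,\infty)$, while the last diagonal entry of $V(\mu)$ (the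 asymptotic variance of $\hat\mu$) is a nondecreasing function of $\mu\in(0,\infty)$.
   Context: Model: observations $y_i\sim\mathrm{Bin}(n_i,p_i)$, $i=1,\dots,r$, independent, with $p_i=h(\boldsymbol{x}_i,\boldsymbol{\beta})$ for a known link-type function $h$, where the sizes $n_i$ are unknown and are independent Poisson random variables with common mean $\mu$; hence marginally $y_i\sim\mathrm{Poisson}(\mu h(\boldsymbol{x}_i,\boldsymbol{\beta}))$, and $I_r(\boldsymbol{\beta},\mu)$ above is the Fisher information matrix for $(\boldsymbol{\beta},\mu)$ in this model. The prime denotes transpose. *)

(* Defs.v *)
From HB Require Import structures.
From mathcomp Require Import all_boot all_order all_algebra.
From mathcomp Require Import all_classical all_reals all_analysis.
Set Implicit Arguments. Unset Strict Implicit. Unset Printing Implicit Defensive.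
Import Order.TTheory GRing.Theory Num.Theory.
Import numFieldNormedType.Exports.
Local Open Scope ring_scope.

Definition grad (R : realType) (q : nat) (f : 'rV[R]_q -> R) (b : 'rV[R]_q)
  : 'cV[R]_q :=
  \col_(j < q) ('D_(delta_mx 0 j) f b).

Definition fisher_info (R : realType) (T : Type) (q r : nat)
  (h : T -> 'rV[R]_q -> R) (x : 'I_r -> T) (beta : 'rV[R]_q) (mu : R)
  : 'M[R]_(q + 1) :=
  block_mx
    (\sum_(i < r) ((mu / h (x i) beta) *: (grad (h (x i)) beta *m (grad (h (x i)) beta)^T)))
    (\sum_(i < r) grad (h (x i)) beta)
    (\sum_(i < r) (grad (h (x i)) beta)^T)
    ((\sum_(i < r) h (x i) beta / mu)%:M).

Definition avar (R : realType) (T : Type) (q r : nat)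
  (h : T -> 'rV[R]_q -> R) (x : 'I_r -> T) (beta : 'rV[R]_q) (mu : R)
  : 'M[R]_(q + 1) := invmx (fisher_info h x beta mu).

(* Main.v *)
Require Import Defs.
From HB Require Import structures.
From mathcomp Require Import all_boot all_order all_algebra.
From mathcomp Require Import all_classical all_reals all_analysis.
Import Order.TTheory GRing.Theory Num.Theory.
Import numFieldNormedType.Exports.
Local Open Scope ring_scope.

Lemma sum_block_mx (R : realType) (m1 m2 n1 n2 r : nat)
  (A : 'I_r -> 'M[R]_(m1, n1)) (B : 'I_r -> 'M[R]_(m1, n2))
  (C : 'I_r -> 'M[R]_(m2, n1)) (D : 'I_r -> 'M[R]_(m2, n2)) :
  \sum_(i < r) block_mx (A i) (B i) (C i) (D i) =
  block_mx (\sum_i A i) (\sum_i B i) (\sum_i C i) (\sum_i D i).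
Proof.
elim: r A B C D => [|r IH] A B C D.
  by rewrite !big_ord0 block_mx0.
by rewrite !(big_ord_recr r) /= IH add_block_mx.
Qed.

Lemma scalar_sum (R : realType) (n r : nat) (a : 'I_r -> R) :
  ((\sum_i a i)%:M : 'M[R]_n) = \sum_i (a i)%:M.
Proof.
elim: r a => [|r IH] a; first by rewrite !big_ord0 raddf0.
by rewrite !(big_ord_recr r) /= -IH raddfD.
Qed.

Section Main.
Variables (R : realType) (q r : nat) (g : 'I_r -> 'cV[R]_q) (hv : 'I_r -> R).
Hypothesis hpos : forall i, 0 < hv i.

Definition FI (mu : R) : 'M[R]_(q + 1) :=
  block_mx
    (\sum_(i < r) ((mu / hv i) *: (g i *m (g i)^T)))
    (\sum_(i < r) g i)
    (\sum_(i < r) (g i)^T)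
    ((\sum_(i < r) hv i / mu)%:M).

Definition vv i : 'cV[R]_(q + 1) := col_mx (g i) ((hv i)%:M).

Lemma FI1E : FI 1 = \sum_i (hv i)^-1 *: (vv i *m (vv i)^T).
Proof.
rewrite /FI /vv.
under [X in _ = X]eq_bigr => i _ do rewrite tr_col_mx mul_col_row scale_block_mx.
rewrite sum_block_mx scalar_sum. f_equal; apply: eq_bigr => i _.
- by rewrite mul1r.
- rewrite matrix.tr_scalar_mx mul_mx_scalar scalerA mulVf ?scale1r //; exact: lt0r_neq0.
- rewrite mul_scalar_mx scalerA mulVf ?scale1r //; exact: lt0r_neq0.
- rewrite matrix.tr_scalar_mx -scalar_mxM -scale_scalar_mx scalerA mulVf ?divr1 ?scale1r //.
  exact: lt0r_neq0 (hpos i).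
Qed.


Lemma FI_fact mu : mu != 0 ->
  FI mu = block_mx (mu%:M) 0 0 1%:M *m FI 1 *m block_mx 1%:M 0 0 (mu^-1%:M).
Proof.
move=> mu0; rewrite /FI !mulmx_block !mul0mx !mulmx0 !mul1mx !mulmx1 !addr0 !add0r.
rewrite !mul_scalar_mx !mul_mx_scalar; congr block_mx.
- rewrite scaler_sumr; apply: eq_bigr => i _; by rewrite scalerA mul1r.
- by rewrite scalerA mulVf // scale1r.
- by rewrite scale_scalar_mx mulr_suml; congr _%:M; apply: eq_bigr => i _; rewrite divr1.
Qed.

Lemma inv_uniq n (A X : 'M[R]_n) : A \in unitmx -> A *m X = 1%:M -> invmx A = X.
Proof.
move=> uA AX; by rewrite -[invmx A]mulmx1 -AX mulmxA mulVmx // mul1mx.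
Qed.

Lemma FIinv mu : 0 < mu -> FI 1 \in unitmx ->
  invmx (FI mu) = block_mx 1%:M 0 0 (mu%:M) *m invmx (FI 1) *m block_mx (mu^-1%:M) 0 0 1%:M.
Proof.
move=> mup u1; have mu0 : mu != 0 by exact: lt0r_neq0.
have uF : FI mu \in unitmx.
  rewrite FI_fact // !unitmx_mul u1 /= !unitmxE !det_ublock !det1 det_scalar det_scalar1 !unitfE.
  by rewrite mulr1 mul1r expf_neq0 // invr_eq0.
apply: inv_uniq => //; rewrite FI_fact //.
rewrite -!mulmxA (mulmxA (block_mx _ _ _ (mu^-1%:M))) mulmx_block.
rewrite !mul0mx !mulmx0 !mul1mx !addr0 !add0r -scalar_mxM mulVf //.
rewrite -scalar_mx_block mul1mx (mulmxA (FI 1)) mulmxV // mul1mx mulmx_block.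
by rewrite !mul0mx !mulmx0 !mul1mx !addr0 !add0r -scalar_mxM mulfV // -scalar_mx_block.
Qed.

Lemma diag_nonneg k : FI 1 \in unitmx -> 0 <= invmx (FI 1) k k.
Proof.
move=> u; pose y : 'cV[R]_(q + 1) := invmx (FI 1) *m delta_mx k 0.
have -> : invmx (FI 1) k k = (y^T *m FI 1 *m y) 0 0.
  rewrite -mulmxA /y [FI 1 *m _]mulmxA mulmxV // mul1mx -colE -colE !mxE //.
rewrite FI1E mulmx_sumr mulmx_suml summxE; apply: sumr_ge0 => i _.
rewrite -scalemxAr -scalemxAl mxE.
have -> : y^T *m (vv i *m (vv i)^T) *m y = ((vv i)^T *m y)^T *m ((vv i)^T *m y).
  by rewrite [((vv i)^T *m y)^T]matrix.trmx_mul matrix.trmxK !mulmxA.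
rewrite !mxE big_ord1 !mxE -expr2; apply: mulr_ge0; last exact: sqr_ge0.
by rewrite invr_ge0 ltW.
Qed.

End Main.
Arguments FI {R q r} g hv mu.
Arguments FIinv {R q r g hv} mu.
Arguments diag_nonneg {R q r g hv}.

Lemma entry_l (R : realType) q (Mi : 'M[R]_(q + 1)) mu j :
  (block_mx 1%:M 0 0 (mu%:M) *m Mi *m block_mx (mu^-1%:M) 0 0 1%:M) (lshift 1 j) (lshift 1 j)
  = Mi (lshift 1 j) (lshift 1 j) / mu.
Proof.
rewrite -{1}[Mi]submxK !mulmx_block !mul0mx !mulmx0 !mul1mx !mulmx1 !addr0 !add0r.
by rewrite block_mxEul mul_mx_scalar !mxE mulrC.
Qed.

Lemma entry_r (R : realType) q (Mi : 'M[R]_(q + 1)) mu :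
  (block_mx 1%:M 0 0 (mu%:M) *m Mi *m block_mx (mu^-1%:M) 0 0 1%:M) (rshift q ord0) (rshift q ord0)
  = mu * Mi (rshift q ord0) (rshift q ord0).
Proof.
rewrite -{1}[Mi]submxK !mulmx_block !mul0mx !mulmx0 !mul1mx !mulmx1 !addr0 !add0r.
by rewrite block_mxEdr mul_scalar_mx !mxE.
Qed.

Theorem mainTheorem1 (R : realType) (T : Type) (q r : nat)
  (h : T -> 'rV[R]_q -> R) (x : 'I_r -> T) (beta : 'rV[R]_q)
  (h_range : forall (t : T) (b : 'rV[R]_q), 0 < h t b < 1)
  (h_diff : forall i : 'I_r, differentiable (h (x i)) beta)
  (nonsing : forall mu : R, 0 < mu -> fisher_info h x beta mu \in unitmx) :
  (forall (j : 'I_q) (mu1 mu2 : R), 0 < mu1 -> mu1 <= mu2 ->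
     avar h x beta mu2 (lshift 1 j) (lshift 1 j)
       <= avar h x beta mu1 (lshift 1 j) (lshift 1 j)) /\
  (forall mu1 mu2 : R, 0 < mu1 -> mu1 <= mu2 ->
     avar h x beta mu1 (rshift q ord0) (rshift q ord0)
       <= avar h x beta mu2 (rshift q ord0) (rshift q ord0)).
Proof.
pose g i := grad (h (x i)) beta.
pose hv i := h (x i) beta.
have hpos : forall i, 0 < hv i by move=> i; case/andP: (h_range (x i) beta).
have EF : forall mu, fisher_info h x beta mu = FI g hv mu by move=> mu; exact: erefl.
have u1 : FI g hv 1 \in unitmx by rewrite -EF; apply: nonsing.
split.
- move=> j mu1 mu2 m1 le12; have m2 : 0 < mu2 by exact: lt_le_trans le12.
  rewrite /avar !EF (FIinv mu1) // (FIinv mu2) // !entry_l.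
  have c0 := diag_nonneg hpos (lshift 1 j) u1.
  by apply: ler_wpM2l => //; rewrite lef_pV2 ?posrE.
- move=> mu1 mu2 m1 le12; have m2 : 0 < mu2 by exact: lt_le_trans le12.
  rewrite /avar !EF (FIinv mu1) // (FIinv mu2) // !entry_r.
  have c0 := diag_nonneg hpos (rshift q ord0) u1.
  by apply: ler_wpM2r.
Qed.
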